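(* Let $(A,\mathfrak m)$ be a local Prüfer ring, $B$ a ring, $f : A \to B$ a ring homomorphism and $J$ a proper ideal of $B$ with $J \subseteq \mathrm{Rad}(B)$. Assume that $J \subseteq f(A)$, $f^{-1}(J) \subseteq Z(A)$ and $f(\mathrm{Reg}(A)) \subseteq \mathrm{Reg}(B)$. Then $Z(A \bowtie^f J) = Z(A) \bowtie^f J$.
   Context: All rings are commutative with identity. For a ring homomorphism $f:A\to B$ and an ideal $J$ of $B$, $A \bowtie^f J := \{(a, f(a)+j) : a \in A, j \in J\}$, a subring of $A\times B$, and for $S\subseteq A$, $S\bowtie^f J := \{(a,f(a)+j): a\in S, j\in J\}$. $Z(R)$ is the set of zero-divisors of $R$, $\mathrm{Reg}(R)=R\setminus Z(R)$, $\mathrm{Rad}(B)$ is the Jacobson radical of $B$. An ideal is regular if it contains a regular element. A ring $R$ is a Prüfer ring if every finitely generated regular ideal of $R$ is invertible. *)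

(* Defs.v *)
From HB Require Import structures.
From mathcomp Require Import all_boot all_order all_algebra.
Set Implicit Arguments. Unset Strict Implicit. Unset Printing Implicit Defensive.
Import GRing.Theory.
Local Open Scope ring_scope.

Section Defs.
Variable R : comNzRingType.

Definition is_ideal (I : R -> Prop) : Prop :=
  [/\ I 0, (forall x y, I x -> I y -> I (x + y)) & (forall r x, I x -> I (r * x))].

Definition is_maximal_ideal (M : R -> Prop) : Prop :=
  [/\ is_ideal M, ~ M 1 &
      forall I : R -> Prop, is_ideal I -> (forall x, M x -> I x) ->
        (forall x, I x <-> M x) \/ I 1].

Definition is_local (Mx : R -> Prop) : Prop :=
  is_maximal_ideal Mx /\
  forall M : R -> Prop, is_maximal_ideal M -> forall x, M x <-> Mx x.

Definition jacobson_rad (x : R) : Prop :=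
  forall M : R -> Prop, is_maximal_ideal M -> M x.

Definition zero_div (x : R) : Prop := exists2 y : R, y != 0 & x * y = 0.
Definition regular (x : R) : Prop := ~ zero_div x.

Definition regular_ideal (I : R -> Prop) : Prop := exists2 x, I x & regular x.

Definition generated_by (s : seq R) (x : R) : Prop :=
  exists c : 'I_(size s) -> R, x = \sum_(i < size s) c i * s`_i.

Definition fin_gen_ideal (I : R -> Prop) : Prop :=
  exists s : seq R, forall x, I x <-> generated_by s x.

Definition ideal_mul (I I' : R -> Prop) (x : R) : Prop :=
  exists n (a b : 'I_n -> R), (forall i, I (a i)) /\ (forall i, I' (b i)) /\
     x = \sum_(i < n) a i * b i.

(* I is invertible (in the total ring of quotients): there is a fractional
   ideal F = d^-1 I' (d regular, I' an ideal of R) with I F = R, i.e. I I' = dR. *)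
Definition invertible_ideal (I : R -> Prop) : Prop :=
  exists (I' : R -> Prop) (d : R), is_ideal I' /\ regular d /\
    forall x, ideal_mul I I' x <-> exists r, x = d * r.

Definition prufer_ring : Prop :=
  forall I : R -> Prop, is_ideal I -> fin_gen_ideal I -> regular_ideal I ->
    invertible_ideal I.

Definition zero_div_in (S : R -> Prop) (x : R) : Prop :=
  S x /\ exists y, [/\ S y, y != 0 & x * y = 0].
End Defs.

Definition amalg (A B : comNzRingType) (f : {rmorphism A -> B})
  (S : A -> Prop) (J : B -> Prop) (p : A * B) : Prop :=
  exists a j, [/\ S a, J j & p = (a, f a + j)].

(* Main.v *)
Require Import Defs.
From HB Require Import structures.
From mathcomp Require Import all_boot all_order all_algebra.
Import GRing.Theory.
Local Open Scope ring_scope.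
From mathcomp Require Import ring boolp classical_sets.

Section ZornSec.
Local Open Scope classical_set_scope.
Lemma exists_max (R : comNzRingType) (I : R -> Prop) :
  is_ideal I -> ~ I 1 -> exists M, is_maximal_ideal M /\ forall x, I x -> M x.
Proof.
move=> HI HI1.
pose P := fun X : R -> Prop => X = (fun _ => False) \/
   (is_ideal X /\ (forall x, I x -> X x) /\ ~ X 1).
have PX : forall X z, P X -> X z -> is_ideal X /\ (forall x, I x -> X x) /\ ~ X 1.
  by move=> X z; rewrite /P => -[->|//].
have HZ : forall F : set (set R), F `<=` P -> total_on F subset ->
      P (\bigcup_(X in F) X).
  move=> F FP Ftot.
  have [[X0 FX0 X00]|nE] := pselect (exists2 X, F X & X 0).
    right; have [[H0 HD HM] [HIX0 _]] := PX _ _ (FP _ FX0) X00.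
    split; last split; first split.
    - by exists X0.
    - move=> x y [X FX Xx] [Y FY Yy].
      have [XY|YX] := Ftot _ _ FX FY.
      + have [[_ HDY _] _] := PX _ _ (FP _ FY) Yy.
        by exists Y => //; apply: HDY => //; apply: XY.
      + have [[_ HDX _] _] := PX _ _ (FP _ FX) Xx.
        by exists X => //; apply: HDX => //; apply: YX.
    - move=> r x [X FX Xx]; have [[_ _ HMX] _] := PX _ _ (FP _ FX) Xx.
      by exists X => //; apply: HMX.
    - by move=> x Ix; exists X0 => //; apply: HIX0.
    - by move=> [X FX X1]; have [_ [_ ]] := PX _ _ (FP _ FX) X1; apply.
  left; apply/funext => x; apply/propext; split=> // -[X FX Xx].
  apply: nE; exists X => //.
  by have [[]] := PX _ _ (FP _ FX) Xx.
have [M [PM Mmax]] := Zorn_bigcup HZ.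
have PI : P I by right.
case: PM => [M0|[HM [IM M1]]].
  exfalso; apply: (Mmax I) => //; rewrite M0; split=> // H.
  by case: HI => H0 _ _; apply: (H 0).
exists M; split=> //; split=> // I' HI' MI'.
have [I'1|nI'1] := pselect (I' 1); first by right.
left; have [I'M|nI'M] := pselect (forall x, I' x -> M x).
  by move=> x; split; [apply: I'M | apply: MI'].
exfalso; apply: (Mmax I'); last first.
  by right; split=> //; split=> // x Ix; apply: MI'; apply: IM.
by split=> // H; apply: nI'M => x; apply: H.
Qed.
End ZornSec.

Section Aux.
Variable A : comNzRingType.

Lemma reg_cancel {x y : A} : regular x -> x * y = 0 -> y = 0.
Proof.
move=> Hx Hy; apply/eqP; apply/negPn/negP => Hne; apply: Hx; by exists y.
Qed.

Lemma unit_notm {m : A -> Prop} : is_local m -> forall r, ~ m r -> exists s, r * s = 1.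
Proof.
move=> [[Hm m1 _] Hu] r nr.
have [//|nE] := pselect (exists s, r * s = 1).
exfalso; pose I := fun x => exists s, x = r * s.
have HI : is_ideal I.
  split; first by exists 0; rewrite mulr0.
  - by move=> x y [s1 ->] [s2 ->]; exists (s1 + s2); rewrite mulrDr.
  - by move=> t x [s ->]; exists (t * s); ring.
have nI1 : ~ I 1 by move=> [s Hs]; apply: nE; exists s.
have [M [HM IM]] := @exists_max _ _ HI nI1.
apply: nr; apply/(Hu M HM); apply: IM; exists 1; by rewrite mulr1.
Qed.

Lemma regD {m : A -> Prop} {a c : A} : is_local m -> prufer_ring A ->
  regular a -> zero_div c -> regular (a + c).
Proof.
move=> Hloc Hpr Ha Hc.
have [[[Hm0 HmD HmM] m1 _] _] := Hloc.
have unit := unit_notm Hloc.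
pose I := fun x => exists u v, x = u * a + v * c.
have HI : is_ideal I.
  split; first by exists 0, 0; rewrite !mul0r addr0.
  - by move=> x y [u1 [v1 ->]] [u2 [v2 ->]]; exists (u1 + u2), (v1 + v2); ring.
  - by move=> t x [u [v ->]]; exists (t * u), (t * v); ring.
have Hfg : fin_gen_ideal I.
  exists [:: a; c] => x; split.
    move=> [u [v ->]]; exists (fun i : 'I_2 => if val i == 0%N then u else v).
    by rewrite !big_ord_recl big_ord0 /= addr0.
  move=> [c' ->]; rewrite !big_ord_recl big_ord0 /= addr0.
  by eexists; eexists.
have Hreg : regular_ideal I by exists a => //; exists 1, 0; ring.
have [I' [d [HI' [Hd Hmul]]]] := Hpr I HI Hfg Hreg.
have [n [u [v [Hu [Hv Hdsum]]]]] := (Hmul d).2 (ex_intro _ 1 (esym (mulr1 d))).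
have Hr : forall i, exists r, u i * v i = d * r.
  move=> i; apply/(Hmul _).1; exists 1%N, (fun _ => u i), (fun _ => v i).
  by do 2!split => //; rewrite big_ord1.
have [r Hr'] := choice Hr.
have Hsum : \sum_i r i = 1.
  apply/eqP; rewrite -subr_eq0; apply/eqP; apply: (reg_cancel Hd).
  rewrite mulrBr mulr1 mulr_sumr; apply/eqP; rewrite subr_eq0; apply/eqP.
  by rewrite [RHS]Hdsum; apply: eq_bigr => i _; rewrite Hr'.
have [[i0 ni0]|nE] := pselect (exists i, ~ m (r i)); last first.
  exfalso; apply: m1; rewrite -Hsum; apply: (big_ind m) => //.
  by move=> i _; have [//|H] := pselect (m (r i)); exfalso; apply: nE; exists i.
have [s Hs] := unit _ ni0.
set g := u i0; set t := v i0.
have Hgt : g * t = d * r i0 by rewrite Hr'.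
have Hx : forall x, I x -> exists z, x = g * z.
  move=> x Ix.
  have [w Hw] : exists w, x * t = d * w.
    apply/(Hmul _).1; exists 1%N, (fun _ => x), (fun _ => t).
    split; first by move=> _. split; first by move=> _; exact: Hv. by rewrite big_ord1.
  have E : x * r i0 = g * w.
    apply/eqP; rewrite -subr_eq0; apply/eqP; apply: (reg_cancel Hd).
    have -> : d * (x * r i0 - g * w) = x * (g * t) - g * (x * t).
      by rewrite Hgt Hw; ring.
    ring.
  exists (w * s).
  have -> : x = x * (r i0 * s) by rewrite Hs mulr1.
  by rewrite mulrA E; ring.
have gcan : forall y, g * y = 0 -> y = 0.
  move=> y Hy.
  have Hry : r i0 * y = 0.
    apply: (reg_cancel Hd).
    have -> : d * (r i0 * y) = t * (g * y) by rewrite mulrA -Hgt; ring.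
    by rewrite Hy mulr0.
  have -> : y = s * (r i0 * y) by rewrite mulrA (mulrC s) Hs mul1r.
  by rewrite Hry mulr0.
have [al Hal] := Hx a (ex_intro _ 1 (ex_intro _ 0 (esym (etrans (congr1 (fun z => z + 0 * c) (mul1r a)) (etrans (congr1 _ (mul0r c)) (addr0 a)))))).
have [be Hbe] := Hx c (ex_intro _ 0 (ex_intro _ 1 (esym (etrans (congr1 (fun z => z + 1 * c) (mul0r a)) (etrans (add0r _) (mul1r c)))))).
have [x1 [y1 Hg]] := Hu i0.
have Hxy : x1 * al + y1 * be = 1.
  apply/eqP; rewrite -subr_eq0; apply/eqP; apply: gcan.
  have -> : g * (x1 * al + y1 * be - 1) = x1 * (g * al) + y1 * (g * be) - g by ring.
  rewrite -Hal -Hbe; rewrite [g in _ - g]Hg; ring.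
have mbe : m be.
  have [//|nb] := pselect (m be); exfalso.
  have [b' Hb'] := unit _ nb.
  case: Hc => z zn0 Hz; move/negP: zn0; apply.
  have Hbz : be * z = 0 by apply: gcan; rewrite mulrA -Hbe.
  apply/eqP; have -> : z = b' * (be * z) by rewrite mulrA (mulrC b') Hb' mul1r.
  by rewrite Hbz mulr0.
have nal : ~ m al.
  move=> Ha'; apply: m1; rewrite -Hxy; apply: HmD; exact: HmM.
have [al' Hal'] := unit _ nal.
pose w := al' * be.
have mw : m w by apply: HmM.
have Eac : a + c = a * (1 + w).
  rewrite Hbe Hal /w.
  have -> : g * be = g * (al * al') * be by rewrite Hal' mulr1.
  ring.
have nw : ~ m (1 + w).
  move=> H; apply: m1.
  have -> : 1 = (1 + w) + (-1) * w by ring.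
  exact: HmD H (HmM _ _ mw).
have [e He] := unit _ nw.
move=> [z zn0 Hz]; move/negP: zn0; apply; apply/eqP.
have H1 : (1 + w) * z = 0 by apply: (reg_cancel Ha); rewrite mulrA -Eac.
have -> : z = e * ((1 + w) * z) by rewrite mulrA (mulrC e) He mul1r.
by rewrite H1 mulr0.
Qed.

End Aux.
Lemma pmul (A B : comNzRingType) (a b : A) (x z : B) :
  ((a, x) : A * B) * (b, z) = (a*b, x*z).
Proof. by []. Qed.
Arguments reg_cancel {A x y}.
Arguments regD {A m a c}.

Theorem lemma2p6 (A B : comNzRingType) (m : A -> Prop) (f : {rmorphism A -> B})
  (J : B -> Prop) :
  is_local m -> prufer_ring A ->
  is_ideal J -> ~ J 1 -> (forall b, J b -> jacobson_rad b) ->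
  (forall b, J b -> exists a, f a = b) ->
  (forall a, J (f a) -> zero_div a) ->
  (forall a, regular a -> regular (f a)) ->
  forall p : A * B,
    zero_div_in (amalg f (fun _ => True) J) p <-> amalg f (@zero_div A) J p.

Proof.
move=> Hloc Hpr [HJ0 HJD HJM] nJ1 _ HJf HJz Hfreg p; split.
- move=> [[a [j [_ Jj ->]]] [[b z] [[b' [k [_ Jk [-> ->]]]] yn0 Hpy]]].
  have [za|ra] := pselect (zero_div a); first by exists a, j.
  exfalso.
  have [Hab Hs] : a * b' = 0 /\ (f a + j) * (f b' + k) = 0.
    by move: Hpy => [-> ->].
  have b0 := reg_cancel ra Hab.
  have [c Hc] := HJf _ Jj.
  have zc : zero_div c by apply: HJz; rewrite Hc.
  have rac := Hfreg _ (regD Hloc Hpr ra zc).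
  have k0 : k = 0.
    apply: (reg_cancel rac); rewrite rmorphD Hc -Hs b0 rmorph0 add0r //.
  move/negP: yn0; apply; rewrite b0 k0 rmorph0 addr0; by [].
- move=> [a [j [za Jj ->]]].
  split; first by exists a, j.
  case: za => b bn0 Hab.
  have [[b' [b'n0 Hab' Jb']]|nE] := pselect (exists b' : A, [/\ b' != 0, a * b' = 0 & J (f b')]).
    exists (b', 0); split.
    + exists b', (- f b'); split => //; last by rewrite addrN.
      by rewrite -mulN1r; apply: HJM.
    + by apply/eqP => /(congr1 fst) /= /eqP; exact/negP.
    + by rewrite pmul Hab' mulr0.
  have [c Hc] := HJf _ Jj.
  have cb0 : c * b = 0.
    have [//|H] := pselect (c * b = 0); exfalso; apply: nE; exists (c * b); split.
    + exact/eqP.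
    + by rewrite mulrCA Hab mulr0.
    + by rewrite rmorphM Hc mulrC; apply: HJM.
  exists (b, f b); split.
  + by exists b, 0; split => //; rewrite addr0.
  + by apply/eqP => /(congr1 fst) /= /eqP; exact/negP.
  + by rewrite pmul Hab -Hc -rmorphD -rmorphM mulrDl Hab cb0 addr0 rmorph0.
Qed.
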